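(* For positive integers $r,k,J$ there exists a constant $l=l(r,k,J)$ such that the following holds. Let $G<\mathrm{Aut}(\mathbb{G}_m^k)\cong\mathbb{G}_m^k\rtimes\mathrm{GL}_k(\mathbb{Z})$ be a finite subgroup, and let $A_0\leqslant G$ be an abelian normal subgroup of rank $r$ and index at most $J$. Then there exists an abelian characteristic subgroup $A\leqslant G$ of index at most $l$ with $A<\mathbb{G}_m^k$ (the subgroup of translations).
   Context: $\mathbb{G}_m^k$ is the $k$-dimensional algebraic torus over an algebraically closed field of characteristic zero, and $\mathrm{Aut}(\mathbb{G}_m^k)$ denotes its automorphism group as a variety, which sits in the exact sequence $1\to\mathbb{G}_m^k\to\mathrm{Aut}(\mathbb{G}_m^k)\to\mathrm{GL}_k(\mathbb{Z})\to1$. *)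

(* Defs.v *)
From HB Require Import structures.
From mathcomp Require Import all_boot all_order all_algebra all_fingroup all_solvable.
Set Implicit Arguments. Unset Strict Implicit. Unset Printing Implicit Defensive.
Import GRing.Theory Num.Theory.
Local Open Scope ring_scope.

(* An element is a pair (t, M) with t : 'rV[K]_k having nonzero entries
   (a point of the torus G_m^k(K) = (K^x)^k) and M : 'M[int]_k invertible
   over Z; it acts on the torus by  x |-> t · x^M,  where
   (x^M)_i = \prod_j x_j ^ (M i j). *)

Definition autGm (K : fieldType) (k : nat) : Type := ('rV[K]_k * 'M[int]_k)%type.

Definition torus_pow (K : fieldType) (k : nat) (M : 'M[int]_k) (x : 'rV[K]_k)
  : 'rV[K]_k := \row_i \prod_j (x 0 j) ^ (M i j).

Definition autGm_act (K : fieldType) (k : nat) (a : autGm K k) (x : 'rV[K]_k)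
  : 'rV[K]_k := \row_i (a.1 0 i * torus_pow a.2 x 0 i).

Definition is_autGm (K : fieldType) (k : nat) (a : autGm K k) : bool :=
  [forall i, a.1 0 i != 0] && (a.2 \in unitmx).

(* group law = composition of automorphisms:
   (t,M) ∘ (s,N) = (t · s^M, M N) *)
Definition autGm_mul (K : fieldType) (k : nat) (a b : autGm K k) : autGm K k :=
  (\row_i (a.1 0 i * torus_pow a.2 b.1 0 i), a.2 *m b.2).

Definition is_translation (K : fieldType) (k : nat) (a : autGm K k) : bool :=
  a.2 == 1%:M.

Definition autGm_embedding (K : fieldType) (k : nat) (gT : finGroupType)
    (G : {group gT}) (phi : gT -> autGm K k) : Prop :=
  [/\ {in G, forall g, is_autGm (phi g)},
      {in G &, forall g h, phi (g * h)%g = autGm_mul (phi g) (phi h)} &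
      {in G &, injective phi}].

(* Main.v *)
Require Import Defs.
From HB Require Import structures.
From mathcomp Require Import all_boot all_order all_algebra all_fingroup all_solvable.
Set Implicit Arguments. Unset Strict Implicit. Unset Printing Implicit Defensive.
Import GRing.Theory Num.Theory.
Local Open Scope ring_scope.

Lemma phi_2M (K : fieldType) n (gT : finGroupType) (G : {group gT}) (phi : gT -> autGm K n.+1) :
  autGm_embedding G phi -> {in G &, forall g h, (phi (g * h)%g).2 = (phi g).2 * (phi h).2}.
Proof. by case=> _ Hm _ g h gG hG; rewrite Hm. Qed.

Lemma phi_unit (K : fieldType) n (gT : finGroupType) (G : {group gT}) (phi : gT -> autGm K n.+1) :
  autGm_embedding G phi -> {in G, forall g, (phi g).2 \is a GRing.unit}.
Proof. by case=> Hu _ _ g gG; case/andP: (Hu g gG). Qed.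

Lemma phi_1 (K : fieldType) n (gT : finGroupType) (G : {group gT}) (phi : gT -> autGm K n.+1) :
  autGm_embedding G phi -> (phi 1%g).2 = 1.
Proof.
move=> E; have u := phi_unit E (group1 G).
have := phi_2M E (group1 G) (group1 G); rewrite mulg1 => H.
by apply: (mulIr u); rewrite mul1r -H.
Qed.

Lemma phi_X (K : fieldType) n (gT : finGroupType) (G : {group gT}) (phi : gT -> autGm K n.+1) :
  autGm_embedding G phi -> forall g m, g \in G -> (phi (g ^+ m)%g).2 = (phi g).2 ^+ m.
Proof.
move=> E g m gG; elim: m => [|m IH]; first by rewrite expg0 expr0 (phi_1 E).
by rewrite expgS (phi_2M E) ?groupX // IH exprS.
Qed.

Lemma torus_pow1 (K : fieldType) n (x : 'rV[K]_n) : torus_pow 1%:M x = x.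
Proof.
apply/rowP=> i; rewrite mxE (bigD1 i) //= big1 => [|j ji].
  by rewrite mxE eqxx /= expr1z mulr1.
by rewrite mxE eq_sym (negPf ji) /= expr0z.
Qed.

Lemma trans_comm (K : fieldType) n (gT : finGroupType) (G : {group gT}) (phi : gT -> autGm K n.+1) :
  autGm_embedding G phi -> forall a b, a \in G -> b \in G ->
  (phi a).2 = 1%:M -> (phi b).2 = 1%:M -> (a * b = b * a)%g.
Proof.
move=> E a b aG bG ha hb; case: E => _ Hm Hi.
apply: Hi; rewrite ?groupM // !Hm //; rewrite /autGm_mul ha hb !torus_pow1.
by congr (_, _); apply/rowP=> i; rewrite !mxE mulrC.
Qed.
From mathcomp Require Import ring.
Definition Dv n (c : int) (X : 'M[int]_n) := exists Y, X = c *: Y.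

Lemma DvD n c (X Y : 'M[int]_n) : Dv c X -> Dv c Y -> Dv c (X + Y).
Proof. by move=> [X' ->] [Y' ->]; exists (X' + Y'); rewrite scalerDr. Qed.
Lemma DvN n c (X : 'M[int]_n) : Dv c X -> Dv c (- X).
Proof. by move=> [X' ->]; exists (- X'); rewrite scalerN. Qed.
Lemma Dv0 n c : Dv c (0 : 'M[int]_n).
Proof. by exists 0; rewrite scaler0. Qed.
Lemma DvMn n c (X : 'M[int]_n) m : Dv c X -> Dv c (X *+ m).
Proof. by move=> [X' ->]; exists (X' *+ m); rewrite scalerMnr. Qed.
Lemma DvMl n c (X Z : 'M[int]_n.+1) : Dv c X -> Dv c (Z * X).
Proof. by move=> [X' ->]; exists (Z * X'); rewrite scalerAr. Qed.
Lemma DvMr n c (X Z : 'M[int]_n.+1) : Dv c X -> Dv c (X * Z).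
Proof. by move=> [X' ->]; exists (X' * Z); rewrite scalerAl. Qed.
Lemma DvZ n c d (X : 'M[int]_n) : Dv c (c * d *: X).
Proof. by exists (d *: X); rewrite scalerA. Qed.

Lemma DvE n c (X : 'M[int]_n) : Dv c X <-> forall i j, (c %| X i j)%Z.
Proof.
split=> [[Y ->] i j|H]; first by rewrite mxE dvdz_mulr.
exists (\matrix_(i, j) (X i j %/ c)%Z); apply/matrixP=> i j.
by rewrite !mxE mulrC divzK.
Qed.

Lemma Dv_pow n c (M : 'M[int]_n.+1) m : Dv c (M - 1) -> Dv c (M ^+ m - 1).
Proof.
move=> H; elim: m => [|m IH]; first by rewrite expr0 subrr; exact: Dv0.
have -> : M ^+ m.+1 - 1 = M ^+ m * (M - 1) + (M ^+ m - 1).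
  by rewrite exprS mulrBr mulr1 -exprS -exprSr addrA addrNK.
by apply: DvD => //; apply: DvMl.
Qed.

Lemma Dv_lim n (X : 'M[int]_n) : (forall a, Dv (3 ^+ a) X) -> X = 0.
Proof.
move=> H; apply/matrixP=> i j; rewrite mxE.
have /DvE/(_ i j) := H `|X i j|%N.
rewrite dvdzE abszX /=.
have [->//|nz] := eqVneq (X i j) 0.
move=> /dvdn_leq; rewrite absz_gt0 nz => /(_ isT).
by rewrite leqNgt ltn_expl.
Qed.
Lemma scale_cancel n (c : int) (X : 'M[int]_n) : c != 0 -> c *: X = 0 -> X = 0.
Proof.
move=> cnz /matrixP H; apply/matrixP=> i j; have := H i j.
by rewrite !mxE => /eqP; rewrite mulf_eq0 (negPf cnz) /= => /eqP.
Qed.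

Lemma step_cop n (M : 'M[int]_n.+1) a p : (0 < p)%N -> ~~ (3 %| p)%N ->
  M ^+ p = 1 -> Dv (3 ^+ a.+1) (M - 1) -> Dv (3 ^+ a.+2) (M - 1).
Proof.
move=> p0 p3 Mp [B eB]; set c : int := 3 ^+ a.+1 in eB.
have eM : M = c *: B + 1 by rewrite -eB subrK.
case: p p0 p3 Mp => // p _ p3.
rewrite eM exprD1n big_ord_recl big_ord_recl /= expr0 expr1 bin0 bin1 mulr1n.
have [Z eZ] : Dv (c * c) (\sum_(i < p) (c *: B) ^+ (bump 0 (bump 0 i)) *+ 'C(p.+1, bump 0 (bump 0 i))).
  apply: (big_ind (Dv (c * c))) => //; [exact: Dv0|exact: DvD|].
  move=> i _; apply: DvMn; rewrite /bump /= exprZn.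
  by rewrite !exprS mulrA; apply: DvZ.
rewrite eZ => H; have E : c *: B *+ p.+1 + c * c *: Z = 0.
  by move/(congr1 (fun x => x - 1)): H; rewrite subrr addrC addKr.
idtac.
have E2 : c *: (B *+ p.+1 + c *: Z) = 0 by rewrite scalerDr scalerA -scalerMnr.
have {E2} E3 := scale_cancel (expf_neq0 _ (isT : (3 : int) != 0)) E2.
have dB : Dv 3 B.
  apply/DvE=> i j; move/matrixP: E3 => /(_ i j); rewrite !mxE => /eqP.
  rewrite mulmxnE addr_eq0 => /eqP; rewrite -[B i j *+ _]mulr_natr natz => E5.
  have cop : coprimez 3 (p.+1)%:Z by rewrite coprimezE absz_nat prime_coprime.
  rewrite -(Gauss_dvdzl _ cop) E5 rpredN; apply: dvdz_mulr.
  by rewrite /c exprS dvdz_mulr.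

case: dB => B' eB'; exists B'; rewrite addrK eB' scalerA /c -exprSr.
by [].
Qed.

Lemma step3 n (M : 'M[int]_n.+1) a :
  M ^+ 3 = 1 -> Dv (3 ^+ a.+1) (M - 1) -> Dv (3 ^+ a.+2) (M - 1).
Proof.
move=> Mp [B eB]; set c : int := 3 ^+ a.+1 in eB.
have eM : M = c *: B + 1 by rewrite -eB subrK.
move: Mp; rewrite eM exprD1n !big_ord_recr big_ord0 /= add0r expr0 !exprZn.
rewrite !expr1 => /eqP; rewrite -subr_eq0 => /eqP H.
have dB : Dv 3 B.
  apply/DvE=> i j; move/matrixP: H => /(_ i j).
  rewrite !mxE.
  set x := B i j; set y := (\sum_j0 B i j0 * B j0 j).
  set z := (\sum_j0 B i j0 * (B * B) j0 j).
  move=> Hij.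
  have ec : c = 3 * 3 ^+ a by rewrite /c exprS.
  have : c * (3 * (x + c * y + 3 * 3 ^+ a * 3 ^+ a * z)) = 0.
    rewrite -Hij ec; ring.
  move/eqP; rewrite mulf_eq0 expf_eq0 /= mulf_eq0 /= => /eqP ex.
  have -> : x = - (c * y + 3 * 3 ^+ a * 3 ^+ a * z).
    by apply/eqP; rewrite -addr_eq0 addrA ex.
  by rewrite rpredN ec -!mulrA -mulrDr dvdz_mulr.
case: dB => B' eB'; exists B'; rewrite addrK eB' scalerA /c -exprSr.
by [].
Qed.

Lemma Mink_gen n (M : 'M[int]_n.+1) :
  (forall a, Dv (3 ^+ a.+1) (M - 1) -> Dv (3 ^+ a.+2) (M - 1)) ->
  Dv 3 (M - 1) -> M = 1.
Proof.
move=> st d3; apply/eqP; rewrite -subr_eq0; apply/eqP/Dv_lim.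
have H : forall a, Dv (3 ^+ a.+1) (M - 1).
  by elim=> [|a IH]; [rewrite expr1 | exact: st].
by case=> [|a]; [exists (M - 1); rewrite expr0 scale1r | exact: H].
Qed.

Lemma Mink_pow n b : forall (M : 'M[int]_n.+1) u, (0 < u)%N -> ~~ (3 %| u)%N ->
  M ^+ (3 ^ b * u) = 1 -> Dv 3 (M - 1) -> M = 1.
Proof.
elim: b => [|b IH] M u u0 u3 Mp d3.
  by apply: Mink_gen d3 => a; apply: step_cop u0 u3 _; rewrite mul1n in Mp.
have N1 : M ^+ 3 = 1.
  apply: (IH _ u) => //; last exact: Dv_pow.
  by rewrite -exprM mulnA -expnS.
by apply: Mink_gen d3 => a; apply: step3.
Qed.

Lemma Mink n (M : 'M[int]_n.+1) m : (0 < m)%N -> M ^+ m = 1 -> Dv 3 (M - 1) -> M = 1.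
Proof.
move=> m0 Mp d3; have [u cu em] := pfactor_coprime (isT : prime 3) m0.
apply: (Mink_pow (b := logn 3 m) (u := u)) => //.
- by move: m0; rewrite em muln_gt0 => /andP[].
- by rewrite -prime_coprime.
- by rewrite mulnC -em.
Qed.
Lemma natZ3 (m : nat) : (m%:R : 'Z_3) = 0 -> (3 %| m)%N.
Proof.
by rewrite Zp_nat => /(congr1 val) /=; rewrite /inZp /= => H; rewrite /dvdn H.
Qed.

Lemma intZ3 (z : int) : (z%:~R : 'Z_3) = 0 -> (3 %| z)%Z.
Proof.
case: z => m /=; rewrite dvdzE /=.
  exact: natZ3.
by rewrite NegzE mulrNz => /eqP; rewrite oppr_eq0 => /eqP; exact: natZ3.
Qed.

Lemma red_Z3 n (M : 'M[int]_n.+1) : M \in unitmx ->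
  Dv 3 (M ^+ #|[set: {unit 'M['Z_3]_n.+1}]| - 1).
Proof.
move=> Mu.
have Mbu : map_mx (intr : int -> 'Z_3) M \is a GRing.unit.
  change (map_mx (intr : int -> 'Z_3) M \in unitmx).
  by rewrite unitmxE det_map_mx rmorph_unit // -unitmxE.
pose u : {unit 'M['Z_3]_n.+1} := insubd (1%g : {unit 'M['Z_3]_n.+1}) (map_mx (intr : int -> 'Z_3) M).
have uE : val u = map_mx (intr : int -> 'Z_3) M by rewrite insubdK.
have := expg_cardG (in_setT u); move=> /(congr1 val).
rewrite FinRing.val_unitX uE FinRing.val_unit1 => E.
have /matrixP H : map_mx (intr : int -> 'Z_3) (M ^+ #|[set: {unit 'M['Z_3]_n.+1}]|) = 1.
  by rewrite rmorphXn /= E.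
apply/DvE=> i j; apply: intZ3; move: (H i j); rewrite !mxE => E2.
by rewrite rmorphB /= E2 rmorph_nat subrr.
Qed.
Open Scope group_scope.
Lemma prod_cst_seq (T : Type) (b : seq T) (e : nat) : (\prod_(x <- b) e = e ^ size b)%N.
Proof. by elim: b => [|x b IH]; rewrite ?big_nil // big_cons IH expnS. Qed.

Lemma card_abel (gT : finGroupType) (H : {group gT}) e :
  abelian H -> (exponent H %| e)%N -> (0 < e)%N -> (#|H| <= e ^ 'm(H)%g)%N.
Proof.
move=> aH eH e0; have [b defH tb] := abelian_structure aH.
rewrite grank_abelian // -size_abelian_type // -tb size_map -(bigdprod_card defH).
have sub x : x \in b -> x \in H.
  move=> xb; rewrite -(bigdprodWY defH) bigcup_seq; apply: mem_gen.
  by apply: (subsetP (bigcup_sup x xb)); apply: cycle_id.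
rewrite -prod_cst_seq big_seq_cond [X in (_ <= X)%N]big_seq_cond; apply: leq_prod => x.
rewrite andbT => /sub xH; rewrite -orderE dvdn_leq //.
exact: dvdn_trans (dvdn_exponent xH) eH.
Qed.
Close Scope group_scope.

Local Close Scope ring_scope.
Local Open Scope group_scope.

Theorem mainTheorem16 :
  forall r k J : nat, (0 < r)%N -> (0 < k)%N -> (0 < J)%N ->
  exists l : nat,
  forall (K : closedFieldType), [pchar K]%R =i pred0 ->
  forall (gT : finGroupType) (G : {group gT}) (phi : gT -> autGm K k),
    autGm_embedding G phi ->
  forall A0 : {group gT},
    (A0 <| G)%g -> (abelian A0)%g -> ('m(A0))%g = r -> (#|G : A0|)%g <= J ->
  exists A : {group gT},
    [/\ (A \char G)%g, (abelian A)%g, (#|G : A|)%g <= l &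
        {in A, forall a, is_translation (phi a)}].
Proof.
move=> r k J r0 k0 J0.
case: k k0 => // n _.
pose e := #|[set: {unit 'M['Z_3]_n.+1}]|.
have e0 : 0 < e by apply/card_gt0P; exists 1%g; rewrite inE.
exists (J * e ^ r)%N.
move=> K _ gT G phi E A0 nA0 abA0 rA0 iA0.
have key : forall g, g \in G -> (phi (g ^+ e)%g).2 = (1%:M)%R.
  move=> g gG; rewrite (phi_X E) //.
  apply: (Mink (m := #[g]%g)); [exact: order_gt0| |exact: red_Z3 (phi_unit E gG)].
  rewrite -exprM -(phi_X E) // mulnC expgM expg_order expg1n.
  exact: (phi_1 E).
pose X := [set (g ^+ e)%g | g in G].
have XG : X \subset G by apply/subsetP => y /imsetP[g gG ->]; exact: groupX.
pose Tset := [set g in G | (phi g).2 == (1%:M)%R].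
have Tgs : group_set Tset.
  apply/group_setP; split; first by rewrite inE group1 (phi_1 E) eqxx.
  move=> a b; rewrite !inE => /andP[aG /eqP ha] /andP[bG /eqP hb].
  by rewrite groupM // (phi_2M E) // ha hb mul1r eqxx.
pose T := Group Tgs.
have XT : X \subset T.
  by apply/subsetP => y /imsetP[g gG ->]; rewrite inE groupX // key // eqxx.
pose A := <<X>>%G.
have AT : A \subset T by rewrite gen_subG.
have abT : abelian T.
  apply/centsP => a; rewrite inE => /andP[aG /eqP ha] b.
  rewrite inE => /andP[bG /eqP hb].
  exact: (trans_comm E).
have charA : A \char G.
  apply/charP; split; first by rewrite gen_subG.
  move=> f injf fG; rewrite /= morphim_gen // morphimEsub //.
  congr <<_>>; apply/setP => y; apply/imsetP/imsetP.
    case=> x /imsetP[g gG ->] ->; exists (f g); last by rewrite morphX.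
    by have := mem_morphim f gG gG; rewrite fG.
  case=> h hG ->; have : h \in f @* G by rewrite fG.
  case/morphimP=> g _ gG ->.
  by exists (g ^+ e)%g; [apply/imsetP; exists g | rewrite morphX].
exists A; split => //.
- exact: abelianS AT abT.
- have nAG := char_normal charA.
  have sAG : A \subset G := normal_sub nAG.
  have sA0G := normal_sub nA0.
  have nA0A : A0 \subset 'N(A) := subset_trans sA0G (normal_norm nAG).
  have Qle : #|A0 / A| <= e ^ r.
    rewrite -rA0; apply: leq_trans (card_abel (quotient_abelian A abA0) _ e0) _.
      apply/exponentP => x /morphimP[a aN aA0 ->]; rewrite -morphX //.
      apply: coset_id; apply: mem_gen; apply/imsetP; exists a => //; exact: subsetP sA0G a aA0.
    by rewrite leq_pexp2l // quotient_grank.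
  have L1 := Lagrange sA0G.
  have L2 := Lagrange sAG.
  have L3 := Lagrange (subsetIl A0 A).
  have c4 : #|A0 :&: A| <= #|A| := subset_leq_card (subsetIr _ _).
  rewrite -(leq_pmul2l (cardG_gt0 A)) L2 -L1 -L3 indexgI -card_quotient //.
  rewrite [(J * _)%N]mulnC mulnA; apply: leq_mul => //; apply: leq_mul => //.
- move=> a /(subsetP AT); rewrite inE => /andP[_ h]; exact: h.
Qed.
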